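(* Let $Y(\mathbb{R}^n)$ be a translation-invariant Banach function space and $\varphi$ a nonincreasing function such that $\varphi(r)\to0$ as $r\to+\infty$ and $r\varphi(r)$ is nondecreasing for $r\ge1$. Suppose $w:\mathbb{R}^n\to[0,\infty]$ is a weight with $w,1/w\in L^\infty_{\rm loc}(\mathbb{R}^n)$ and there exist $C_0,C_1>0$, $\gamma>0$ and $\theta\in\mathbb{R}^n$ with $|\theta|=1$ such that \[ C_0\exp(|x|\varphi(|x|))\le w(x)\le C_1\exp(|x|\varphi(|x|))\quad\text{whenever } \Big|\frac{x}{|x|}-\theta\Big|<\gamma,\ |x|\ge1. \] Then $X(\mathbb{R}^n)=Y(\mathbb{R}^n,w)$ satisfies the weak doubling property and there exists a constant $C>0$ such that $\|\chi_{B(0,R)}\|_{X(\mathbb{R}^n)}\ge C\exp(R\varphi(R))$ for all sufficiently large $R$.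
   Context: Banach function spaces: let $\mathfrak{M}^+(\mathbb{R}^n)$ be the set of measurable functions with values in $[0,\infty]$. A Banach function norm $\rho:\mathfrak{M}^+\to[0,\infty]$ satisfies, for all $f,g,f_j\in\mathfrak{M}^+$, $a\ge0$, measurable $E$: (A1) $\rho(f)=0\iff f=0$ a.e., $\rho(af)=a\rho(f)$, $\rho(f+g)\le\rho(f)+\rho(g)$; (A2) $0\le g\le f$ a.e. implies $\rho(g)\le\rho(f)$; (A3) $0\le f_j\uparrow f$ a.e. implies $\rho(f_j)\uparrow\rho(f)$; (A4) $|E|<\infty$ implies $\rho(\chi_E)<\infty$; (A5) $|E|<\infty$ implies $\int_Ef\le C_E\rho(f)$ with $C_E$ independent of $f$. $Y(\mathbb{R}^n)$ is the set of measurable complex $f$ with $\rho(|f|)<\infty$, $\|f\|_Y=\rho(|f|)$. $Y$ is translation-invariant if $\|u(\cdot-y)\|_Y=\|u\|_Y$ for all $y$, $u\in Y$. A weight is a measurable $w$ with $0<w<\infty$ a.e.; $Y(\mathbb{R}^n,w)=\{f: fw\in Y\}$ with $\|f\|_{Y(\mathbb{R}^n,w)}=\|fw\|_Y$. Weak doubling property: a Banach function space $Z(\mathbb{R}^n)$ has it if there is $\tau>1$ with $\liminf_{R\to\infty}\big(\inf_{y\in\mathbb{R}^n}\|\chi_{B(y,\tau R)}\|_{Z}/\|\chi_{B(y,R)}\|_{Z}\big)<\infty$, where $B(y,R)$ is the open ball of radius $R$ centered at $y$. *)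

(* Defs.v *)
From HB Require Import structures.
From mathcomp Require Import all_boot all_order all_algebra.
From mathcomp Require Import all_classical all_reals all_analysis.
From mathcomp Require Import measurable_realfun.
Set Implicit Arguments. Unset Strict Implicit. Unset Printing Implicit Defensive.
Import Order.TTheory GRing.Theory Num.Theory.
Import numFieldNormedType.Exports.
Local Open Scope classical_set_scope.
Local Open Scope ring_scope.

(* R^n is represented by row vectors 'rV[R]_n.  [Rn R n] is R^n equipped with
   its Borel sigma-algebra (generated by the open sets). *)
Definition Rn (R : realType) (n : nat) := g_sigma_algebraType (@open 'rV[R]_n).

Definition enorm {R : realType} {n : nat} (x : 'rV[R]_n) : R :=
  Num.sqrt (\sum_(i < n) x 0 i ^+ 2).
Definition eball {R : realType} {n : nat} (y : 'rV[R]_n) (r : R) : set 'rV[R]_n :=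
  [set x | enorm (x - y) < r].

(* [mu] is Lebesgue measure on the Borel sets of R^n: the measure of every
   half-open box prod_i [a_i, b_i) is its volume (this determines mu uniquely). *)
Definition is_lebesgue {R : realType} {n : nat}
    (mu : {measure set (Rn R n) -> \bar R}) : Prop :=
  forall a b : 'rV[R]_n, (forall i, a 0 i <= b 0 i) ->
    mu [set x : 'rV[R]_n | forall i, a 0 i <= x 0 i < b 0 i]
    = (\prod_(i < n) (b 0 i - a 0 i))%:E.

(* The Lebesgue sigma-algebra (completion of the Borel one): R^n with the
   Caratheodory-measurable sets of the outer measure induced by mu. *)
Notation LRn mu := (caratheodory_type (mu^*)%mu).

Section BFS.
Context {R : realType} {n : nat} (mu : {measure set (Rn R n) -> \bar R}).
Local Notation LRn := (LRn mu).

Definition leb : set LRn -> \bar R := @completed_measure_extension _ (Rn R n) R mu.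
HB.instance Definition _ := Measure.on leb.

Local Open Scope ereal_scope.

Definition chi (A : set 'rV[R]_n) : LRn -> \bar R := fun x => (\1_A x)%:E.

Definition Mplus (f : LRn -> \bar R) : Prop :=
  measurable_fun [set: LRn] f /\ forall x, 0 <= f x.

Definition banach_function_norm (rho : (LRn -> \bar R) -> \bar R) : Prop :=
  [/\
      (forall f, Mplus f -> (rho f = 0 <-> {ae leb, forall x, f x = 0})),
      (forall f (a : R), Mplus f -> (0 <= a)%R -> rho (fun x => a%:E * f x) = a%:E * rho f),
      (forall f g, Mplus f -> Mplus g -> rho (fun x => f x + g x) <= rho f + rho g),
      (forall f g, Mplus f -> Mplus g -> {ae leb, forall x, g x <= f x} -> rho g <= rho f) &
      [/\
      (forall f (fs : nat -> LRn -> \bar R), Mplus f -> (forall j, Mplus (fs j)) ->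
        {ae leb, forall x, nondecreasing_seq (fun j => fs j x) /\
                           (fun j => fs j x) @ \oo --> f x} ->
        nondecreasing_seq (fun j => rho (fs j)) /\ (fun j => rho (fs j)) @ \oo --> rho f),
      (forall E : set LRn, measurable E -> leb E < +oo -> rho (fun x => (\1_E x)%:E) < +oo) &
      (forall E : set LRn, measurable E -> leb E < +oo ->
        exists C : R, forall f, Mplus f -> \int[leb]_(x in E) f x <= C%:E * rho f)]].

(* Translation invariance of Y: ||u(. - y)||_Y = ||u||_Y for every u in Y
   (with ||u||_Y = rho(|u|)). *)
Definition translation_invariant (rho : (LRn -> \bar R) -> \bar R) : Prop :=
  forall (u : LRn -> R) (y : 'rV[R]_n), measurable_fun [set: LRn] u ->
    rho (fun x => (`|u x|)%:E) < +oo ->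
    rho (fun x => (`|u ((x : 'rV[R]_n) - y)|)%:E) = rho (fun x => (`|u x|)%:E).

Definition weight (w : LRn -> \bar R) : Prop :=
  [/\ measurable_fun [set: LRn] w, (forall x, 0 <= w x) &
      {ae leb, forall x, 0 < w x < +oo}].

Definition Linf_loc (g : LRn -> \bar R) : Prop :=
  measurable_fun [set: LRn] g /\
  forall r : R, exists M : R, {ae leb, forall x, (enorm (x : 'rV[R]_n) < r)%R -> `|g x| <= M%:E}.

(* the norm of X = Y(R^n, w): ||f||_X = ||f w||_Y = rho(|f| w) *)
Definition Xnorm (rho : (LRn -> \bar R) -> \bar R) (w : LRn -> \bar R)
    (f : LRn -> \bar R) : \bar R :=
  rho (fun x => `|f x| * w x).

End BFS.

Local Open Scope ereal_scope.

Definition liminf_pinfty {R : realType} (F : R -> \bar R) : \bar R :=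
  ereal_sup [set ereal_inf [set F r | r in [set r | (r0 <= r)%R]] | r0 in [set: R]].

(* Weak doubling property of a Banach function space Z, given through the map
   A |-> ||chi_A||_Z on subsets of R^n. *)
Definition weak_doubling {R : realType} {n : nat}
    (chinorm : set 'rV[R]_n -> \bar R) : Prop :=
  exists tau : R, (1 < tau)%R /\
    liminf_pinfty (fun r : R =>
      ereal_inf [set chinorm (eball y (tau * r)) / chinorm (eball y r) | y in [set: 'rV[R]_n]])
    < +oo.

(* Main.v *)
Require Import Defs.
From HB Require Import structures.
From mathcomp Require Import all_boot all_order all_algebra.
From mathcomp Require Import all_classical all_reals all_analysis.
From mathcomp Require Import measurable_realfun.
From mathcomp Require Import ring lra.
Import Order.TTheory GRing.Theory Num.Theory.
Import numFieldNormedType.Exports.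
Local Open Scope classical_set_scope.
Local Open Scope ring_scope.

Section Enorm.
Context {R : realType} {n : nat}.
Implicit Types x y : 'rV[R]_n.

Let S x := \sum_(i < n) x 0 i ^+ 2.

Lemma S_ge0 x : 0 <= \sum_(i < n) x 0 i ^+ 2.
Proof. by apply: sumr_ge0 => i _; exact: sqr_ge0. Qed.

Lemma enorm_ge0 x : 0 <= enorm x.
Proof. exact: sqrtr_ge0. Qed.

Lemma enorm_sq x : enorm x ^+ 2 = \sum_(i < n) x 0 i ^+ 2.
Proof. by rewrite /enorm sqr_sqrtr // S_ge0. Qed.

Lemma enorm_le x b : 0 <= b -> \sum_(i < n) x 0 i ^+ 2 <= b ^+ 2 -> enorm x <= b.
Proof.
move=> b0 h; rewrite /enorm -(ger0_norm b0) -sqrtr_sqr ler_sqrt //.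
exact: sqr_ge0.
Qed.

Lemma enorm_lt x b : 0 < b -> \sum_(i < n) x 0 i ^+ 2 < b ^+ 2 -> enorm x < b.
Proof.
move=> b0 h; rewrite /enorm -(gtr0_norm b0) -sqrtr_sqr ltr_sqrt //.
by rewrite exprn_gt0.
Qed.

Lemma enorm_coord x i : `|x 0 i| <= enorm x.
Proof.
rewrite /enorm -sqrtr_sqr ler_sqrt ?S_ge0 //.
rewrite (bigD1 i) //= lerDl; apply: sumr_ge0 => j _; exact: sqr_ge0.
Qed.

Lemma enormZ a x : enorm (a *: x) = `|a| * enorm x.
Proof.
rewrite /enorm (eq_bigr (fun i => a ^+ 2 * x 0 i ^+ 2)); last first.
  by move=> i _; rewrite mxE exprMn.
by rewrite -mulr_sumr sqrtrM ?sqr_ge0 // sqrtr_sqr.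
Qed.

Lemma enormN x : enorm (- x) = enorm x.
Proof. by rewrite -scaleN1r enormZ normrN normr1 mul1r. Qed.

Lemma enormB x y : enorm (x - y) = enorm (y - x).
Proof. by rewrite -enormN opprB. Qed.

Lemma enorm0 : enorm (0 : 'rV[R]_n) = 0.
Proof.
rewrite /enorm big1 ?sqrtr0 // => i _; by rewrite mxE expr0n.
Qed.

Lemma CS x y : \sum_(i < n) x 0 i * y 0 i <= enorm x * enorm y.
Proof.
set A := enorm x; set B := enorm y.
have A0 : 0 <= A by exact: enorm_ge0.
have B0 : 0 <= B by exact: enorm_ge0.
have [AB0|ABpos] := eqVneq (A * B) 0.
  rewrite AB0.
  have : (A == 0) || (B == 0) by rewrite -mulf_eq0 AB0.
  case/orP => /eqP Z.
  - have : \sum_(i < n) x 0 i ^+ 2 = 0 by rewrite -enorm_sq -/A Z expr0n.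
    move/eqP; rewrite psumr_eq0; last by move=> i _; exact: sqr_ge0.
    move/allP => H; rewrite big1 // => i _.
    have := H i (mem_index_enum i); rewrite /= sqrf_eq0 => /eqP ->.
    by rewrite mul0r.
  - have : \sum_(i < n) y 0 i ^+ 2 = 0 by rewrite -enorm_sq -/B Z expr0n.
    move/eqP; rewrite psumr_eq0; last by move=> i _; exact: sqr_ge0.
    move/allP => H; rewrite big1 // => i _.
    have := H i (mem_index_enum i); rewrite /= sqrf_eq0 => /eqP ->.
    by rewrite mulr0.
have ABp : 0 < A * B by rewrite lt_def ABpos mulr_ge0.
have key : 2 * (A * B) * \sum_(i < n) x 0 i * y 0 i <= 2 * (A * B) * (A * B).
  rewrite mulr_sumr.
  have -> : 2 * (A * B) * (A * B) =
    \sum_(i < n) (B ^+ 2 * x 0 i ^+ 2 + A ^+ 2 * y 0 i ^+ 2).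
    rewrite big_split /= -!mulr_sumr -!enorm_sq -/A -/B; ring.
  apply: ler_sum => i _.
  have := sqr_ge0 (B * x 0 i - A * y 0 i); nra.
have p2 : 0 < 2 * (A * B) by rewrite mulr_gt0.
by rewrite ler_pM2l in key.
Qed.

Lemma enorm_triangle x y : enorm (x + y) <= enorm x + enorm y.
Proof.
apply: enorm_le; first by rewrite addr_ge0 // enorm_ge0.
rewrite (eq_bigr (fun i => x 0 i ^+ 2 + 2 * (x 0 i * y 0 i) + y 0 i ^+ 2)); last first.
  by move=> i _; rewrite mxE; ring.
rewrite !big_split /= -mulr_sumr -!enorm_sq.
have := CS x y; nra.
Qed.

Lemma enorm_rev x y : enorm x - enorm y <= enorm (x - y).
Proof.
have := enorm_triangle (x - y) y; rewrite subrK; lra.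
Qed.

Lemma enorm_small x r : 0 < r -> (forall i, `|x 0 i| <= r / n.+1%:R) -> enorm x < r.
Proof.
move=> r0 h; apply: enorm_lt => //.
set c := r / n.+1%:R.
have c0 : 0 < c by rewrite divr_gt0.
apply: (le_lt_trans (y := \sum_(i < n) c ^+ 2)).
  apply: ler_sum => i _; move: (h i); rewrite -/c ler_norml => /andP[h1 h2].
  nra.
rewrite sumr_const card_ord -mulr_natr.
have rc : r = c * n.+1%:R by rewrite /c divfK // pnatr_eq0.
rewrite rc -natr1.
have N0 : 0 <= n%:R :> R by [].
nra.
Qed.

End Enorm.

Section Cone.
Context {R : realType} {n : nat}.

Lemma cone_geom (th x : 'rV[R]_n) (t s : R) : enorm th = 1 -> 0 < s -> s < t ->
  enorm (x - t *: th) < s ->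
  [/\ t - s < enorm x, enorm x < t + s &
      enorm ((enorm x)^-1 *: x - th) < 2 * s / t].
Proof.
move=> th1 s0 st h.
have t0 : 0 < t by apply: lt_trans st.
have et : enorm (t *: th) = t by rewrite enormZ th1 mulr1 gtr0_norm.
have h1 : t - s < enorm x.
  have := enorm_rev (t *: th) x; rewrite et enormB; lra.
have h2 : enorm x < t + s.
  have := enorm_triangle (x - t *: th) (t *: th); rewrite subrK et => HH.
  apply: (le_lt_trans HH).
  by rewrite addrC ltrD2l.
split => //.
set e := enorm x in h1 h2 *.
have e0 : 0 < e by apply: lt_trans h1; rewrite subr_gt0.
have -> : e^-1 *: x - th = (e^-1 - t^-1) *: x + t^-1 *: (x - t *: th).
  rewrite scalerBl scalerBr scalerA mulVf ?gt_eqF // scale1r.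
  by rewrite addrA subrK.
apply: (le_lt_trans (enorm_triangle _ _)).
rewrite !enormZ -/e.
have -> : `|e^-1 - t^-1| * e = `|t - e| / t.
  have -> : (e^-1 - t^-1) = (t - e) / (e * t) by field; rewrite ?gt_eqF.
  rewrite normrM normfV normrM (gtr0_norm e0) (gtr0_norm t0).
  by field; rewrite ?gt_eqF.
rewrite [`|t^-1|]gtr0_norm ?invr_gt0 //.
have ht : `|t - e| < s by rewrite ltr_norml; apply/andP; split; lra.
rewrite [t^-1 * _]mulrC -mulrDl ltr_pM2r ?invr_gt0 //.
have -> : 2 * s = s + s by ring.
exact: ltrD ht h.
Qed.

End Cone.

Section Meas.
Context {R : realType} {n : nat} (mu : {measure set (Rn R n) -> \bar R}).
Local Notation T := (LRn mu).

Lemma eball_open (y : 'rV[R]_n) r : open (eball y r).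
Proof.
rewrite openE => x Bx.
rewrite /interior; apply/nbhs_ballP.
have d0 : 0 < r - enorm (x - y) by rewrite subr_gt0.
exists ((r - enorm (x - y)) / n.+1%:R); first by rewrite /= divr_gt0.
move=> z /= [_ Hz].
have hz : enorm (z - x) < r - enorm (x - y).
  apply: enorm_small => // i.
  have := Hz 0 i; rewrite /ball /= => h.
  by rewrite !mxE distrC ltW.
rewrite /eball /=.
have := enorm_triangle (z - x) (x - y).
rewrite addrA subrK => h.
apply: (le_lt_trans h).
by rewrite -ltrBrDr.
Qed.

Lemma open_measRn (A : set 'rV[R]_n) : open A -> measurable (A : set (Rn R n)).
Proof. by move=> oA; apply: sub_sigma_algebra. Qed.

Lemma measRn_measT (A : set 'rV[R]_n) : measurable (A : set (Rn R n)) ->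
  measurable (A : set T).
Proof. move=> mA; exact: (@caratheodory_measurable_mu_ext _ R (Rn R n) mu A mA). Qed.

Lemma eball_meas (y : 'rV[R]_n) r : measurable (eball y r : set T).
Proof. apply: measRn_measT; apply: open_measRn; exact: eball_open. Qed.

Lemma box_meas (a b : 'rV[R]_n) :
  measurable ([set x : 'rV[R]_n | forall i, a 0 i <= x 0 i < b 0 i] : set (Rn R n)).
Proof.
have -> : [set x : 'rV[R]_n | forall i, a 0 i <= x 0 i < b 0 i] =
  \bigcap_(i in [set: 'I_n]) (~` [set x : 'rV[R]_n | x 0 i < a 0 i] `&`
                              [set x : 'rV[R]_n | x 0 i < b 0 i]).
  apply/seteqP; split => x /=.
    move=> h i _; have /andP[h1 h2] := h i; split => //.
    by apply/negP; rewrite -leNgt.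
  move=> h i; have [h1 h2] := h i I; apply/andP; split => //.
  by rewrite leNgt; apply/negP.
apply: fin_bigcap_measurable; first exact: finite_finset.
have oc (i : 'I_n) c : open [set x : 'rV[R]_n | x 0 i < c].
  have -> : [set x : 'rV[R]_n | x 0 i < c] = (fun x : 'rV[R]_n => x 0 i) @^-1` [set u | u < c].
    by [].
  apply: open_comp; last exact: open_lt.
  move=> x _; exact: coord_continuous.
move=> i _; apply: measurableI; first apply: measurableC.
  exact: open_measRn.
exact: open_measRn.
Qed.

End Meas.

Section Rho.
Context {R : realType} {n : nat} {mu : {measure set (Rn R n) -> \bar R}}.
Local Notation T := (LRn mu).
Context {rho : (T -> \bar R) -> \bar R} (hb : banach_function_norm rho).
Local Open Scope ereal_scope.
Local Notation Mplus := (@Mplus R n mu).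
Local Notation chi := (@chi R n mu).

Lemma ind_ge0 (T0 : Type) (A : set T0) (x : T0) : (0 <= (\1_A x : R))%R.
Proof. by rewrite indicE. Qed.

Lemma chi_meas (A : set 'rV[R]_n) : measurable (A : set T) ->
  measurable_fun [set: T] (chi A).
Proof. by move=> mA; apply/measurable_EFinP; exact: measurable_indic. Qed.

Lemma chi_Mplus (A : set 'rV[R]_n) : measurable (A : set T) -> Mplus (chi A).
Proof. by move=> mA; split; [exact: chi_meas | move=> x; rewrite lee_fin ind_ge0]. Qed.

Lemma cchi_Mplus (c : R) (A : set 'rV[R]_n) : measurable (A : set T) -> (0 <= c)%R ->
  Mplus (fun x => c%:E * chi A x).
Proof.
move=> mA c0; split.
  by apply: emeasurable_funM; [exact: measurable_cst | exact: chi_meas].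
by move=> x; rewrite mule_ge0 // lee_fin ?ind_ge0.
Qed.

Lemma wchi_Mplus (w : T -> \bar R) (A : set 'rV[R]_n) : measurable (A : set T) ->
  measurable_fun [set: T] w -> (forall x, 0 <= w x) ->
  Mplus (fun x => `|chi A x| * w x).
Proof.
move=> mA mw w0; split.
  apply: emeasurable_funM => //.
  by apply: measurableT_comp; [exact: abse_measurable | exact: chi_meas].
by move=> x; rewrite mule_ge0.
Qed.

Lemma Mplus0 : Mplus (fun _ : T => 0).
Proof. by split; [exact: measurable_cst | move=> x]. Qed.

Lemma rho0 : rho (fun _ => 0) = 0.
Proof.
case: hb => A1a _ _ _ _.
by apply/(A1a _ Mplus0); apply: aeW.
Qed.

Lemma rho_mono f g : Mplus f -> Mplus g -> (forall x, g x <= f x) -> rho g <= rho f.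
Proof.
case: hb => _ _ _ A2 _ mf mg h.
by apply: A2 => //; apply: aeW.
Qed.

Lemma rho_ge0 f : Mplus f -> 0 <= rho f.
Proof.
move=> mf; rewrite -rho0; apply: rho_mono => //.
all: try exact: Mplus0.
by move=> x; case: mf => _; apply.
Qed.

Lemma rho_scale (c : R) f : Mplus f -> (0 <= c)%R -> rho (fun x => c%:E * f x) = c%:E * rho f.
Proof. by case: hb => _ A1b _ _ _; apply: A1b. Qed.

Lemma rho_sum (I : Type) (s : seq I) (F : I -> T -> \bar R) :
  (forall i, Mplus (F i)) ->
  Mplus (fun x => \sum_(i <- s) F i x) /\
  rho (fun x => \sum_(i <- s) F i x) <= \sum_(i <- s) rho (F i).
Proof.
move=> hF; elim: s => [|a s [IHm IHr]].
  under eq_fun do rewrite big_nil.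
  by rewrite big_nil rho0; split => //; exact: Mplus0.
under eq_fun do rewrite big_cons.
rewrite big_cons.
have hm : Mplus (fun x => F a x + \sum_(j <- s) F j x).
  split.
    by apply: emeasurable_funD; [case: (hF a) | case: IHm].
  by move=> x; rewrite adde_ge0 //; [case: (hF a) => _; apply | case: IHm => _; apply].
split => //.
case: hb => _ _ A1c _ _.
apply: le_trans (A1c _ _ (hF a) IHm) _.
exact: leeD2l.
Qed.

End Rho.

Section Rho2.
Context {R : realType} {n : nat} {mu : {measure set (Rn R n) -> \bar R}}.
Local Notation T := (LRn mu).
Context {rho : (T -> \bar R) -> \bar R} (hb : banach_function_norm rho).
Local Open Scope ereal_scope.
Local Notation Mplus := (@Mplus R n mu).
Local Notation chi := (@chi R n mu).

Lemma rho_pos (mu_leb : is_lebesgue mu) (y : 'rV[R]_n) (r : R) : (0 < r)%R ->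
  0 < rho (chi (eball y r)).
Proof.
move=> r0.
have mB := chi_Mplus _ (eball_meas mu y r).
rewrite lt_def (rho_ge0 hb _ mB) andbT; apply/negP => /eqP h0.
case: hb => A1a _ _ _ _.
have := (A1a _ mB).1 h0 => -[N [mN N0 sub]].
set c := (r / n.+1%:R)%R.
have c0 : (0 < c)%R by rewrite divr_gt0.
pose a := \row_(i < n) (y 0 i - c)%R.
pose b := \row_(i < n) (y 0 i + c)%R.
set box := [set x : 'rV[R]_n | forall i, a 0 i <= x 0 i < b 0 i]%R.
have boxN : box `<=` N.
  move=> x hx; apply: sub => /=.
  have xB : eball y r x.
    rewrite /eball /=; apply: enorm_small => // i.
    have /andP[h1 h2] := hx i; move: h1 h2; rewrite !mxE => h1 h2.
    rewrite ler_norml; apply/andP; split; rewrite -/c; lra.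
  by rewrite /chi indicE mem_set //= => /eqP; rewrite eqe oner_eq0.
have := @le_mu_ext _ (Rn R n) R mu box N boxN.
have -> : (mu^*)%mu N = 0 by exact: N0.
rewrite measurable_mu_extE; last exact: box_meas.
rewrite mu_leb; last by move=> i; rewrite !mxE; lra.
rewrite lee_fin leNgt => /negP; apply.
apply: prodr_gt0 => i _; rewrite !mxE; lra.
Qed.

Lemma rho_transl (Y_ti : translation_invariant rho) (y z : 'rV[R]_n) (r : R) :
  rho (chi (eball y r)) < +oo -> rho (chi (eball z r)) = rho (chi (eball y r)).
Proof.
move=> fin.
have mu_ : measurable_fun [set: T] (\1_(eball y r) : T -> R).
  exact: measurable_indic (eball_meas mu y r).
have e1 : (fun x : T => (`|(\1_(eball y r) : T -> R) x|)%:E) = chi (eball y r).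
  by apply/funext => x; rewrite /chi ger0_norm // ind_ge0.
have e2 : (fun x : T => (`|(\1_(eball y r) : T -> R) ((x : 'rV[R]_n) - (z - y))%R|)%:E)
    = chi (eball z r).
  apply/funext => x; rewrite /chi ger0_norm ?ind_ge0 //.
  rewrite !indicE.
  have -> : (((x : 'rV[R]_n) - (z - y))%R \in eball y r) = ((x : 'rV[R]_n) \in eball z r).
    by apply/idP/idP; rewrite !in_setE /eball /= opprB addrA addrAC addrK.
  by [].
have H := Y_ti _ (z - y)%R mu_.
rewrite -e1 -e2; apply: H; by rewrite e1.
Qed.

End Rho2.

Section Cover.
Context {R : realType} {n : nat}.

Definition gm := (2 * n + 2)%N.
Definition GK := {ffun 'I_n -> 'I_(2 * gm).+1}.
Definition gpt (y : 'rV[R]_n) (h : R) (k : GK) : 'rV[R]_n :=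
  \row_i (y 0 i + h * (((k i : nat)%:R : R) - (gm%:R : R))).

Lemma cover (y : 'rV[R]_n) (r : R) : 0 < r -> forall x : 'rV[R]_n,
  enorm (x - y) < 2 * r -> exists k : GK, enorm (x - gpt y (r / n.+1%:R) k) < r.
Proof.
move=> r0 x hx.
set h := r / n.+1%:R.
have h0 : 0 < h by rewrite divr_gt0.
have mh : (gm%:R : R) * h = 2 * r.
  have -> : gm = (2 * n.+1)%N by rewrite /gm mulnS addnC.
  rewrite natrM /h; field.
  by rewrite addrC natr1 pnatr_eq0.
pose u i := (x 0 i - y 0 i) / h + (gm%:R : R) + 2^-1.
have hd i : x 0 i - y 0 i = h * (u i - gm%:R - 2^-1).
  by rewrite /u; field; rewrite gt_eqF.
have hu i : 0 <= u i /\ u i < (2 * gm).+1%:R.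
  have hc := enorm_coord (x - y) i; rewrite !mxE in hc.
  have hc2 : `|x 0 i - y 0 i| < gm%:R * h by rewrite mh; exact: le_lt_trans hc hx.
  move: hc2; rewrite hd normrM (gtr0_norm h0) [_ * h]mulrC ltr_pM2l // ltr_norml.
  move=> /andP[h1 h2].
  rewrite -natr1 natrM.
  have g0 : (0 : R) <= gm%:R by [].
  split; lra.
pose k : GK := [ffun i => inord (Num.trunc (u i))].
exists k.
apply: enorm_small => // i.
have [u0 u1] := hu i.
rewrite !mxE ffunE inordK; last by rewrite ltnS -ltnS truncn_lt_nat.
have /andP[t1 t2] := truncn_itv u0.
rewrite opprD addrA hd -mulrBr normrM (gtr0_norm h0) -/h.
rewrite -[X in _ <= X]mulr1 ler_pM2l // ler_norml.
move: t2; rewrite -natr1 => t2.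
apply/andP; split; lra.
Qed.

End Cover.

Section Helpers.
Context {R : realType} {n : nat} {mu : {measure set (Rn R n) -> \bar R}}.
Local Open Scope ereal_scope.

Lemma chi_in (A : set 'rV[R]_n) (x : LRn mu) : A x -> chi A x = 1.
Proof. by move=> Ax; rewrite /chi indicE mem_set. Qed.

Lemma chi_out (A : set 'rV[R]_n) (x : LRn mu) : ~ A x -> chi A x = 0.
Proof. by move=> Ax; rewrite /chi indicE memNset. Qed.

End Helpers.

Lemma ratio_le {R : realType} (num den : \bar R) (B c : R) : (0 < c)%R ->
  (0 <= num)%E -> (num <= B%:E)%E -> (c%:E <= den)%E -> (num / den <= (B / c)%:E)%E.
Proof.
move=> c0 n0 nB cd.
have B0 : (0 <= B)%R by rewrite -lee_fin (le_trans n0 nB).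
case: den cd => [d| |] cd.
- rewrite lee_fin in cd.
  have d0 : (0 < d)%R by exact: lt_le_trans cd.
  case: num n0 nB => [a| |] n0 nB //.
  rewrite inver gt_eqF // -EFinM lee_fin.
  rewrite lee_fin in n0 nB.
  apply: (@le_trans _ _ (a / c)).
    by rewrite ler_wpM2l // lef_pV2 // posrE.
  by rewrite ler_wpM2r // invr_ge0 ltW.
- by rewrite invey mule0 lee_fin divr_ge0 // ltW.
- by [].
Qed.

Theorem lemma3p10 (R : realType) (n : nat)
  (mu : {measure set (Rn R n) -> \bar R}) (mu_leb : is_lebesgue mu)
  (rho : (LRn mu -> \bar R) -> \bar R)
  (rho_bfn : banach_function_norm rho)
  (Y_ti : translation_invariant rho)
  (phi : R -> R)
  (phi_noninc : forall r s : R, 0 < r -> r <= s -> phi s <= phi r)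
  (phi_lim : phi x @[x --> +oo] --> 0)
  (phi_rphi : forall r s : R, 1 <= r -> r <= s -> r * phi r <= s * phi s)
  (w : LRn mu -> \bar R)
  (w_weight : weight w)
  (w_loc : Linf_loc w)
  (winv_loc : Linf_loc (fun x => (w x)^-1%E))
  (w_cone : exists (C0 C1 gamma : R) (theta : 'rV[R]_n),
     [/\ 0 < C0, 0 < C1, 0 < gamma, enorm theta = 1 &
      forall x : 'rV[R]_n, 1 <= enorm x ->
        enorm ((enorm x)^-1 *: x - theta) < gamma ->
        ((C0 * expR (enorm x * phi (enorm x)))%:E <= w x)%E /\
        (w x <= (C1 * expR (enorm x * phi (enorm x)))%:E)%E]) :
  weak_doubling (fun A => Xnorm rho w (chi A)) /\
  exists C : R, 0 < C /\ exists R0 : R, forall r : R, R0 <= r ->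
    ((C * expR (r * phi r))%:E <= Xnorm rho w (chi (eball 0 r)))%E.
Proof.
case: w_weight => mw w0 _.
case: w_cone => C0 [C1 [gamma [th [C00 C10 g0 th1 hcone]]]].
have wM (A : set 'rV[R]_n) : open A -> Mplus (fun x : LRn mu => (`|chi A x| * w x)%E).
  move=> oA; apply: wchi_Mplus => //.
  by apply: measRn_measT; apply: open_measRn.
split.
  pose N : R := \sum_(k <- index_enum (@GK n)) (1 : R).
  have N0 : 0 <= N by rewrite /N sumr_ge0.
  set M := C1 * expR 1 * N / C0.
  have M0 : 0 <= M by rewrite /M divr_ge0 ?mulr_ge0 ?expR_ge0 // ltW.
  have key : forall r : R, 1 <= r -> exists y : 'rV[R]_n,
     (Xnorm rho w (chi (eball y (2 * r))) / Xnorm rho w (chi (eball y r)) <= M%:E)%E.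
    move=> r r1.
    have r0 : 0 < r by apply: lt_le_trans r1.
    have [T0 hT0] : exists T0 : R, forall s, T0 < s -> phi s < (4 * r)^-1.
      have e0 : 0 < (4 * r)^-1 by rewrite invr_gt0 mulr_gt0.
      have := cvgr_lt _ phi_lim _ e0; case=> M' [_ HM]; by exists M'.
    pose t : R := 2 * r + 1 + `|T0| + 4 * r / gamma.
    have hg : 0 <= 4 * r / gamma by rewrite divr_ge0 // ?mulr_ge0 // ltW.
    have aT : T0 <= `|T0| by exact: ler_norm.
    have aT0 : 0 <= `|T0| by exact: normr_ge0.
    have hT : T0 < t - 2 * r by rewrite /t; lra.
    have t2r : 2 * r < t by rewrite /t; lra.
    have tm1 : 1 <= t - 2 * r by rewrite /t; lra.
    have tpos : 0 < t by lra.
    have tg : 2 * (2 * r) / t <= gamma.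
      have : 4 * r / gamma <= t by rewrite /t; lra.
      rewrite ler_pdivrMr // => h1.
      rewrite ler_pdivrMr //; lra.
    pose A := (t - 2 * r) * phi (t - 2 * r).
    have hphi : 4 * r * phi (t - 2 * r) < 1.
      have := hT0 _ hT.
      rewrite -(@ltr_pM2l _ (4 * r)) ?mulr_gt0 // mulfV // gt_eqF // mulr_gt0 //.
    have fA : (t + 2 * r) * phi (t + 2 * r) <= A + 1.
      have h1 : phi (t + 2 * r) <= phi (t - 2 * r) by apply: phi_noninc; lra.
      have h2 : (t + 2 * r) * phi (t + 2 * r) <= (t + 2 * r) * phi (t - 2 * r).
        by rewrite ler_wpM2l //; lra.
      rewrite /A; nra.
    pose y : 'rV[R]_n := t *: th.
    have r20 : 0 < 2 * r by lra.
    have incone : forall x : 'rV[R]_n, eball y (2 * r) x ->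
        [/\ t - 2 * r < enorm x, enorm x < t + 2 * r &
          ((C0 * expR (enorm x * phi (enorm x)))%:E <= w x)%E /\
          (w x <= (C1 * expR (enorm x * phi (enorm x)))%:E)%E].
      move=> x hx.
      have [h1 h2 h3] := @cone_geom _ _ th x t (2 * r) th1 r20 t2r hx.
      split => //; apply: hcone; first by lra.
      exact: lt_le_trans h3 tg.
    pose c1 := C1 * expR (A + 1).
    pose c0 := C0 * expR A.
    have c10 : 0 <= c1 by rewrite mulr_ge0 ?expR_ge0 // ltW.
    have c00 : 0 < c0 by rewrite mulr_gt0 ?expR_gt0.
    have up : forall x : 'rV[R]_n, eball y (2 * r) x -> (w x <= c1%:E)%E.
      move=> x hx; have [h1 h2 [_ hi]] := incone x hx.
      apply: (le_trans hi); rewrite lee_fin ler_pM2l // ler_expR.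
      have : enorm x * phi (enorm x) <= (t + 2 * r) * phi (t + 2 * r).
        by apply: phi_rphi; lra.
      lra.
    have low : forall x : 'rV[R]_n, eball y r x -> (c0%:E <= w x)%E.
      move=> x hx.
      have hx2 : eball y (2 * r) x by move: hx; rewrite /eball /=; lra.
      have [h1 h2 [lo _]] := incone x hx2.
      apply: le_trans lo; rewrite lee_fin ler_pM2l // ler_expR.
      by apply: phi_rphi; lra.
    exists y.
    have mB2 : measurable (eball y (2 * r) : set (LRn mu)) by exact: eball_meas.
    have mB1 : measurable (eball y r : set (LRn mu)) by exact: eball_meas.
    have numle : (Xnorm rho w (chi (eball y (2 * r))) <= c1%:E * rho (chi (eball y (2 * r))))%E.
      rewrite /Xnorm -(rho_scale rho_bfn _ _ (chi_Mplus _ mB2) c10).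
      apply: (rho_mono rho_bfn _ _ (cchi_Mplus _ _ mB2 c10) (wM _ (eball_open y (2 * r)))).
      move=> x; case: (pselect (eball y (2 * r) x)) => hx.
        by rewrite !chi_in // mule1 abse1 mul1e; exact: up.
      by rewrite !chi_out // abse0 mul0e mule0.
    have denge : (c0%:E * rho (chi (eball y r)) <= Xnorm rho w (chi (eball y r)))%E.
      rewrite /Xnorm -(rho_scale rho_bfn _ _ (chi_Mplus _ mB1) (ltW c00)).
      apply: (rho_mono rho_bfn _ _ (wM _ (eball_open y r)) (cchi_Mplus _ _ mB1 (ltW c00))).
      move=> x; case: (pselect (eball y r x)) => hx.
        by rewrite !chi_in // mule1 abse1 mul1e; exact: low.
      by rewrite !chi_out // mule0 mule_ge0.
    pose h := r / n.+1%:R.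
    have hmB k : measurable (eball (gpt y h k) r : set (LRn mu)) by exact: eball_meas.
    have covle : (rho (chi (eball y (2 * r))) <=
        \sum_(k <- index_enum (@GK n)) rho (chi (eball (gpt y h k) r)))%E.
      have [Ms Ss] := rho_sum rho_bfn _ (index_enum (@GK n))
         (fun k => chi (eball (gpt y h k) r)) (fun k => chi_Mplus _ (hmB k)).
      apply: le_trans Ss.
      apply: (rho_mono rho_bfn _ _ Ms (chi_Mplus _ mB2)) => x.
      case: (pselect (eball y (2 * r) x)) => hx.
        have [k hk] := cover y r r0 x hx.
        rewrite chi_in // (bigD1_seq k) ?mem_index_enum ?index_enum_uniq //=.
        rewrite chi_in //; apply: leeDl.
        by apply: sume_ge0 => j _; rewrite /chi lee_fin ind_ge0.
      rewrite chi_out //; apply: sume_ge0 => j _; rewrite /chi lee_fin ind_ge0.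
      by [].
    have numge0 : (0 <= Xnorm rho w (chi (eball y (2 * r))))%E.
      exact: (rho_ge0 rho_bfn _ (wM _ (eball_open y (2 * r)))).
    have rhoge0 := rho_ge0 rho_bfn _ (chi_Mplus _ mB1).
    case Er : (rho (chi (eball y r))) rhoge0 => [q| |] rhoge0.
    - have q0 : 0 < q.
        by rewrite -lte_fin -Er; exact: (rho_pos rho_bfn mu_leb y r r0).
      have fin : (rho (chi (eball y r)) < +oo)%E by rewrite Er ltry.
      have sumE : (\sum_(k <- index_enum (@GK n)) rho (chi (eball (gpt y h k) r)))
          = (q * N)%:E.
        rewrite (eq_bigr (fun _ => q%:E)); last first.
          by move=> k _; rewrite (rho_transl Y_ti y (gpt y h k) r fin) Er.
        rewrite sumEFin /N mulr_sumr; congr (_%:E).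
        by apply: eq_bigr => k _; rewrite mulr1.
      have : (Xnorm rho w (chi (eball y (2 * r))) / Xnorm rho w (chi (eball y r))
          <= ((c1 * (q * N)) / (c0 * q))%:E)%E.
        apply: ratio_le => //; first by rewrite mulr_gt0.
          apply: (le_trans numle); rewrite [X in (_ <= X)%E]EFinM; apply: lee_wpmul2l; first by rewrite lee_fin.
          by rewrite -sumE.
        by rewrite EFinM -Er.
      have -> : c1 * (q * N) / (c0 * q) = M.
        rewrite /c1 /c0 /M expRD; field.
        by rewrite !gt_eqF ?expR_gt0.
      by [].
    - have : Xnorm rho w (chi (eball y r)) = +oo%E.
        apply/eqP; rewrite -leye_eq; apply: le_trans denge.
        by rewrite Er mulry gtr0_sg // mul1e.
      by move=> ->; rewrite invey mule0 lee_fin.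
    - by [].
  exists 2; split; first by rewrite ltr1n.
  apply: (@le_lt_trans _ _ M%:E); last exact: ltry.
  rewrite /liminf_pinfty; apply: ub_ereal_sup => _ [r0 _ <-].
  set r1 := Num.max r0 1.
  have r11 : 1 <= r1 by rewrite le_max lexx orbT.
  have [y hy] := key r1 r11.
  apply: le_trans; first by apply: ereal_inf_lbound; exists r1 => //=; rewrite le_max lexx.
  apply: le_trans hy.
  by apply: ereal_inf_lbound; exists y.

set g' := Num.min gamma 1.
have g'0 : 0 < g' by rewrite lt_min g0 ltr01.
have g'1 : g' <= 1 by rewrite ge_min lexx orbT.
have g'g : g' <= gamma by rewrite ge_min lexx.
pose d : R := g' / 2.
have d0 : 0 < d by rewrite divr_gt0.
have [p [p0 hp]] : exists p : R, 0 < p /\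
    forall y : 'rV[R]_n, (p%:E <= rho (chi (eball y d)))%E.
  have rp := rho_pos rho_bfn mu_leb 0 d d0.
  case E0 : (rho (chi (eball 0 d))) rp => [p| |] rp.
  - exists p; split; first by rewrite -lte_fin.
    move=> y; case: (ltP (rho (chi (eball y d))) +oo%E) => hy.
      by rewrite -(rho_transl Y_ti y 0 d hy) E0.
    by rewrite (le_trans _ hy) // leey.
  - exists 1; split => // y.
    case: (ltP (rho (chi (eball y d))) +oo%E) => hy.
      by move: E0; rewrite (rho_transl Y_ti y 0 d hy) => E0; rewrite E0 in hy.
    by rewrite (le_trans _ hy) // leey.
  - by [].
set c := C0 * expR (- (2 * phi 1)).
have c0 : 0 < c by rewrite mulr_gt0 // expR_gt0.
exists (c * p); split; first by rewrite mulr_gt0.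
exists 3 => r r3.
set y := (r - 1) *: th.
have d2 : d <= 2^-1 by rewrite /d ler_pdivrMr //; lra.
have rd : d < r - 1 by lra.
have dg : d < gamma by rewrite /d ltr_pdivrMr //; lra.
have hpt : forall x : 'rV[R]_n, eball y d x ->
   eball 0 r x /\ ((c * expR (r * phi r))%:E <= w x)%E.
  move=> x hx.
  have [h1 h2 h3] := @cone_geom _ _ th x (r - 1) d th1 d0 rd hx.
  split; first by rewrite /eball /= subr0; lra.
  have ex1 : 1 <= enorm x by lra.
  have cone : enorm ((enorm x)^-1 *: x - th) < gamma.
    apply: (lt_le_trans h3).
    have : 2 * d / (r - 1) <= d by rewrite ler_pdivrMr; [nra | lra].
    lra.
  have [hw _] := hcone x ex1 cone.
  apply: le_trans hw; rewrite lee_fin /c -mulrA -expRD ler_pM2l // ler_expR.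
  have f1 : (r - 2) * phi (r - 2) <= enorm x * phi (enorm x).
    by apply: phi_rphi; lra.
  have f2 : phi r <= phi (r - 2) by apply: phi_noninc; lra.
  have f3 : phi (r - 2) <= phi 1 by apply: phi_noninc; lra.
  nra.
rewrite /Xnorm.
have mB : measurable (eball y d : set (LRn mu)) by exact: eball_meas.
set F := (fun x : LRn mu => ((c * expR (r * phi r))%:E * chi (eball y d) x)%E).
have step1 : ((c * p * expR (r * phi r))%:E <= rho F)%E.
  have ce0 : 0 <= c * expR (r * phi r) by rewrite mulr_ge0 ?expR_ge0 // ltW.
  rewrite /F (rho_scale rho_bfn _ _ (chi_Mplus _ mB) ce0).
  rewrite mulrAC EFinM.
  apply: lee_wpmul2l; first by rewrite lee_fin.
  exact: hp.
apply: (le_trans step1).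
have ce0 : 0 <= c * expR (r * phi r) by rewrite mulr_ge0 ?expR_ge0 // ltW.
apply: (rho_mono rho_bfn _ _ (wM _ (eball_open 0 r)) (cchi_Mplus _ _ mB ce0)).
move=> x; case: (pselect (eball y d x)) => hx.
  have [hb hw] := hpt x hx.
  by rewrite !chi_in // mule1 abse1 mul1e.
by rewrite chi_out // mule0 mule_ge0.
Qed.
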